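(* For any integer $N>10$ and any integer $m\ge1$, there exists a collection $\mathcal{I}$ of $N$ pairwise disjoint subintervals of $[-\tfrac12,\tfrac12]$, each of length $\frac{N^{-(2m-1)}}{3m}$, such that the Minkowski sums $I_1+\cdots+I_m$ ($I_1,\dots,I_m\in\mathcal{I}$) form a pairwise disjoint collection, i.e. whenever $(I_1,\dots,I_m)$ and $(J_1,\dots,J_m)$ are elements of $\mathcal{I}^m$ that differ as multisets, $(I_1+\cdots+I_m)\cap(J_1+\cdots+J_m)=\emptyset$. *)

(* Defs.v *)
From Stdlib Require Import Reals.
From mathcomp Require Import all_boot.
Set Implicit Arguments. Unset Strict Implicit. Unset Printing Implicit Defensive.

Open Scope R_scope.

Definition cinterval (a b : R) : R -> Prop := fun x => a <= x <= b.

Definition ivl (p : R * R) : R -> Prop := cinterval (fst p) (snd p).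

Definition msum (A B : R -> Prop) : R -> Prop :=
  fun x => exists a b, A a /\ B b /\ x = a + b.

Definition msum_seq (s : seq (R -> Prop)) : R -> Prop :=
  foldr msum (fun x => x = 0) s.

Definition disjoint_sets (A B : R -> Prop) : Prop := forall x, ~ (A x /\ B x).

(* Main.v *)
Require Import Defs.
From Stdlib Require Import Reals Lra.
From mathcomp Require Import all_boot zify.
Set Implicit Arguments. Unset Strict Implicit. Unset Printing Implicit Defensive.

Local Open Scope nat_scope.

Definition Ssum (a : nat -> nat) (s : seq nat) := sumn (map a s).
Definition Bm (m : nat) (a : nat -> nat) (n : nat) :=
  forall s t : seq nat, all (fun i => i < n) s -> all (fun i => i < n) t ->
  size s = size t -> size s <= m -> ~~ perm_eq s t -> Ssum a s <> Ssum a t.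
Definition Forb (m : nat) (a : nat -> nat) (n x : nat) :=
  exists u v : seq nat, all (fun i => i < n) u /\ all (fun i => i < n) v /\
  size u < size v <= m /\ x * (size v - size u) + Ssum a u = Ssum a v.

Lemma pad_filter (n m : nat) (v : seq nat) : all (fun i => i < n) v -> size v <= m ->
  [seq i <- map (nth n v) (iota 0 m) | i < n] = v.
Proof.
move=> hv hs; rewrite -(subnKC hs) iotaD map_cat filter_cat.
have -> : [seq i <- map (nth n v) (iota 0 (size v)) | i < n] = v.
  by rewrite -/(mkseq _ _) mkseq_nth; apply/all_filterP.
rewrite add0n (@eq_in_filter _ _ pred0) ?filter_pred0 ?cats0 // => j /mapP [k hk ->].
rewrite nth_default ?ltnn //; rewrite mem_iota in hk; lia.
Qed.

Local Notation DD m n := ({ffun 'I_m -> 'I_n.+1} * {ffun 'I_m.-1 -> 'I_n.+1})%type.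

Lemma forb_avoid (m : nat) (a : nat -> nat) (n N : nat) : 0 < m -> n < N ->
  exists x, x <= N ^ (2 * m - 1) /\ ~ Forb m a n x.
Proof.
move=> hm hn.
pose dec (k : nat) (w : {ffun 'I_k -> 'I_n.+1}) :=
  [seq i <- [seq val (w j) | j <- enum 'I_k] | i < n].
pose h (w : DD m n) := let v := dec _ w.1 in let u := dec _ w.2 in
  (Ssum a v - Ssum a u) %/ (size v - size u).
have hcard : #|{: DD m n}| <= N ^ (2 * m - 1).
  rewrite card_prod !card_ffun !card_ord -expnD.
  have -> : m + m.-1 = 2 * m - 1 by lia.
  by rewrite leq_exp2r //; lia.
have enc k (v : seq nat) : all (fun i => i < n) v -> size v <= k ->
    dec k [ffun j : 'I_k => inord (nth n v j)] = v.
  move=> hv hs; rewrite /dec -[RHS](pad_filter hv hs) -val_enum_ord -map_comp.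
  congr filter; apply: eq_map => j /=; rewrite ffunE inordK //.
  case: (ltnP j (size v)) => hj; last by rewrite nth_default.
  by apply: ltnW; move/allP: hv; apply; apply: mem_nth.
have inc x : Forb m a n x -> x \in codom h.
  case=> u [v [hu [hv [/andP [huv hvm] he]]]].
  have -> : x = h ([ffun j : 'I_m => inord (nth n v j)],
                   [ffun j : 'I_m.-1 => inord (nth n u j)]).
    rewrite /h /= !enc //; last by lia.
    rewrite -he addnK mulnK //; lia.
  exact: (codom_f h).
case: (boolP (has (fun x => x \notin codom h) (iota 0 (N ^ (2 * m - 1)).+1))).
  case/hasP => x; rewrite mem_iota add0n ltnS => /= hx hnot.
  exists x; split => // /inc; exact/negP.
move/hasPn => hall; exfalso.
have := uniq_leq_size (iota_uniq 0 (N ^ (2 * m - 1)).+1) (s2 := codom h).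
rewrite size_iota size_codom => H.
have : (N ^ (2 * m - 1)).+1 <= #|{: DD m n}|.
  apply: H => x /hall; by rewrite negbK.
lia.
Qed.

Lemma decomp (a : nat -> nat) n x s : all (fun i => i < n.+1) s ->
  [/\ Ssum (fun i => if i == n then x else a i) s =
        count_mem n s * x + Ssum a (filter (predC1 n) s),
      size s = count_mem n s + size (filter (predC1 n) s),
      all (fun i => i < n) (filter (predC1 n) s) &
      perm_eq s (nseq (count_mem n s) n ++ filter (predC1 n) s)].
Proof.
elim: s => [|i s IH]; first by [].
rewrite [all _ _]/= => /andP [hi hs]; case: (IH hs) => e1 e2 e3 e4.
have SS : forall f y, Ssum f (y :: s) = f y + Ssum f s by [].
case: (i =P n) => [->|ne].
  have F : filter (predC1 n) (n :: s) = filter (predC1 n) s by rewrite /= eqxx.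
  have C : count_mem n (n :: s) = (count_mem n s).+1 by rewrite /= eqxx.
  rewrite F C SS eqxx e1; split.
  - by rewrite mulSn addnA.
  - by rewrite /= e2.
  - exact: e3.
  - by rewrite /= perm_cons.
have hin : (i == n) = false by apply/eqP.
have F : filter (predC1 n) (i :: s) = i :: filter (predC1 n) s by rewrite /= hin.
have C : count_mem n (i :: s) = count_mem n s by rewrite /= hin.
rewrite F C SS hin e1; split.
- by rewrite addnCA.
- by rewrite /= e2 addnS.
- rewrite [all _ _]/= e3 andbT; move: hi ne; rewrite ltnS leq_eqVlt => /orP [/eqP|] //.
- have e5 : perm_eq (i :: s) (i :: (nseq (count_mem n s) n ++ filter (predC1 n) s)) by rewrite perm_cons.
  apply: (perm_trans e5); rewrite -cat1s; by rewrite perm_catCA.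
Qed.

Lemma extend m a n x : Bm m a n -> ~ Forb m a n x ->
  Bm m (fun i => if i == n then x else a i) n.+1.
Proof.
move=> hB hF s t hs ht hst hsm hp.
case: (decomp a x hs) => es zs as_ ps.
case: (decomp a x ht) => et zt at_ pt.
rewrite es et.
set k := count_mem n s in es zs ps *; set k' := count_mem n t in et zt pt *.
set s' := filter _ s in es zs as_ ps *; set t' := filter _ t in et zt at_ pt *.
clearbody k k' s' t'.
rewrite zs zt in hst; rewrite zs in hsm.
have key : forall k k' (s' t' : seq nat), all (fun i => i < n) s' -> all (fun i => i < n) t' ->
    k' < k -> k + size s' = k' + size t' -> k + size s' <= m ->
    k * x + Ssum a s' <> k' * x + Ssum a t'.
  move=> K K' u v hu hv hK hz hm' e.
  apply: hF; exists u, v; split => //; split => //; split; first (apply/andP; split; lia).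
  have -> : size v - size u = K - K' by lia.
  have : K * x = K' * x + (K - K') * x by rewrite -mulnDl subnKC // ltnW.
  lia.
case: (ltngtP k k') => hk.
- move=> e; apply: (key k' k t' s' at_ as_ hk); [exact: esym hst | by rewrite -hst | by rewrite e].
- by apply: key.
have hp' : ~~ perm_eq s' t'.
  apply: contra hp => hp'.
  rewrite (perm_trans ps) // perm_sym (perm_trans pt) // hk perm_cat2l perm_sym //.
rewrite hk in hst hsm.
move=> e; apply: (hB s' t' as_ at_) => //.
- exact: addnI hst.
- exact: leq_trans (leq_addl _ _) hsm.
- by move: e; rewrite hk => /addnI.
Qed.

Lemma build m N : 0 < m -> forall n, n <= N ->
  exists a, (forall i, a i <= N ^ (2 * m - 1)) /\ Bm m a n.
Proof.
move=> hm; elim=> [|n IH] hn.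
  exists (fun _ => 0); split => // s t.
  case: s => [|? ?] //; case: t => [|? ?] //.
case: (IH (ltnW hn)) => a [ha hB].
case: (forb_avoid a hm hn) => x [hx hF].
exists (fun i => if i == n then x else a i); split; first by move=> i; case: eqP.
exact: extend.
Qed.

Local Open Scope R_scope.

Lemma INR_expn (N k : nat) : INR (expn N k) = INR N ^ k.
Proof.
elim: k => [|k IH]; first by rewrite expn0.
by rewrite expnS mult_INR IH.
Qed.

Lemma msum_bound (T : Type) (f : T -> nat) (c d L y : R) (s : seq T) :
  msum_seq [seq ivl (c + INR (f i) * d, c + INR (f i) * d + L) | i <- s] y ->
  INR (size s) * c + INR (sumn (map f s)) * d <= y <=
  INR (size s) * c + INR (sumn (map f s)) * d + INR (size s) * L.
Proof.
elim: s y => [|i s IH] y.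
  rewrite /msum_seq /= => ->; lra.
case=> [u [v [[hu1 hu2] [hv ->]]]].
have := IH v hv; rewrite /= in hu1 hu2.
change (size (i :: s)) with (size s).+1.
change (sumn (map f (i :: s))) with (f i + sumn (map f s))%N.
rewrite S_INR plus_INR; lra.
Qed.

Lemma sep (A B : nat) (d e c y : R) : A <> B -> 0 < d -> e < d ->
  c + INR A * d <= y <= c + INR A * d + e ->
  c + INR B * d <= y <= c + INR B * d + e -> False.
Proof.
move=> hAB hd he hA hB.
have : (A < B)%N || (B < A)%N by rewrite -neq_ltn; apply/eqP.
case/orP => /ltP h.
- have h1 : INR A + 1 <= INR B by rewrite -S_INR; apply: le_INR.
  have : (INR A + 1) * d <= INR B * d by apply: Rmult_le_compat_r; lra.
  lra.
- have h1 : INR B + 1 <= INR A by rewrite -S_INR; apply: le_INR.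
  have : (INR B + 1) * d <= INR A * d by apply: Rmult_le_compat_r; lra.
  lra.
Qed.

Theorem lemma3p1 (N m : nat) (hN : (10 < N)%N) (hm : (1 <= m)%N) :
  exists I : 'I_N -> R * R,
    (forall i : 'I_N,
        -(1/2) <= fst (I i) /\ snd (I i) <= 1/2 /\
        snd (I i) - fst (I i) = (/ INR N) ^ (2 * m - 1)%N / (3 * INR m)) /\
    (forall i j : 'I_N, i <> j -> disjoint_sets (ivl (I i)) (ivl (I j))) /\
    (forall s t : m.-tuple 'I_N, ~~ perm_eq s t ->
        disjoint_sets (msum_seq [seq ivl (I i) | i <- s])
                      (msum_seq [seq ivl (I i) | i <- t])).
Proof.
case: (build hm (leqnn N)) => a [ha hB].
set D := (/ INR N) ^ (2 * m - 1)%N.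
set L := D / (3 * INR m).
set d := D / 2.
have hP : D = / INR (expn N (2 * m - 1)) by rewrite INR_expn /D pow_inv.
have hP1 : 1 <= INR (expn N (2 * m - 1)).
  rewrite -[1]/(INR 1); apply: le_INR; apply/leP; rewrite expn_gt0; apply/orP; left; lia.
have hD0 : 0 < D by rewrite hP; apply: Rinv_0_lt_compat; lra.
have hD1 : D <= 1 by rewrite hP -Rinv_1; apply: Rinv_le_contravar; lra.
have hm1 : 1 <= INR m by rewrite -[1]/(INR 1); apply: le_INR; apply/leP.
have hmL : INR m * L = D / 3 by rewrite /L; field; lra.
have hL0 : 0 <= L by rewrite /L; apply: Rle_mult_inv_pos; lra.
have hLm : L <= INR m * L by nra.
have haD : forall i, INR (a i) * D <= 1.
  move=> i; rewrite hP; apply/(Rmult_le_reg_r (INR (expn N (2 * m - 1)))); first lra.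
  rewrite Rmult_assoc Rinv_l ?Rmult_1_r ?Rmult_1_l; last lra.
  by apply: le_INR; apply/leP.
have ha0 : forall i, 0 <= INR (a i) * D by move=> i; apply: Rmult_le_pos => //; [apply: pos_INR | lra].
exists (fun i : 'I_N => (-(1/2) + INR (a i) * d, -(1/2) + INR (a i) * d + L)).
split; [|split].
- move=> i /=; have h1 := haD i; have h2 := ha0 i.
  have h3 : L <= D / 3 by rewrite -hmL.
  rewrite /d; split; [|split]; try lra.
- move=> i j hij x [hx1 hx2].
  have hne : a i <> a j.
    move=> e; apply: (hB [:: val i] [:: val j]) => //=; rewrite ?ltn_ord //.
    + apply/negP => /perm_mem/(_ (val i)); rewrite !inE eqxx => /esym/eqP/val_inj.
      exact: hij.
    + by rewrite /Ssum /= e.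
  apply: (sep hne (d:=d) (e:=L) (c:=-(1/2)) (y:=x)); rewrite /d; try lra; [exact: hx1|exact: hx2].
- move=> s t hst x [hx1 hx2].
  have hs := msum_bound (f := fun i : 'I_N => a (val i)) hx1.
  have ht := msum_bound (f := fun i : 'I_N => a (val i)) hx2.
  rewrite !size_tuple in hs ht.
  have hne : sumn [seq a (val i) | i <- s] <> sumn [seq a (val i) | i <- t].
    have := hB (map val s) (map val t).
    rewrite /Ssum -!map_comp !size_map !size_tuple; apply => //.
    + by apply/allP => i /mapP [j _ ->]; apply: ltn_ord.
    + by apply/allP => i /mapP [j _ ->]; apply: ltn_ord.
    + apply: contra hst; exact: (perm_map_inj val_inj).
  apply: (sep hne (d:=d) (e:=INR m * L) (c:=INR m * (-(1/2))) (y:=x)); rewrite /d; try lra; [exact: hs|exact: ht].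
Qed.
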